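(* Let $\mathcal{H}^c_{A_{n-1}}$ be the degenerate affine Hecke–Clifford algebra of type $A_{n-1}$. If $\lambda$ is a partition of $n$ having at least one even part and $w\in S_n$ has cycle type $\lambda$, then $w\in[\mathcal{H}^c_{A_{n-1}},\mathcal{H}^c_{A_{n-1}}]$.
   Context: $\mathcal{H}^c_{A_{n-1}}$ (parameter $u\in\mathbb{C}$) is the $\mathbb{C}$-algebra generated by commuting $x_1,\dots,x_n$, Clifford generators $c_1,\dots,c_n$ ($c_i^2=1$, $c_ic_j=-c_jc_i$ for $i\ne j$) and $S_n$ (simple reflections $s_i=(i,i+1)$), with $\mathbb{C}[x]$, the Clifford algebra and $\mathbb{C}S_n$ subalgebras and relations $x_ic_i=-c_ix_i$, $x_ic_j=c_jx_i$ ($i\ne j$), $\sigma c_i=c_{\sigma(i)}\sigma$ ($\sigma\in S_n$), $x_{i+1}s_i-s_ix_i=u(1-c_{i+1}c_i)$, $x_js_i=s_ix_j$ ($j\ne i,i+1$). $[H,H]$ is the linear span of all $hh'-h'h$. *)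

(* Defs.v *)
From HB Require Import structures.
From mathcomp Require Import all_boot all_order all_algebra all_fingroup.
From mathcomp Require Import complex.
From mathcomp Require Import Rstruct.
From Stdlib Require Rdefinitions.
Set Implicit Arguments. Unset Strict Implicit. Unset Printing Implicit Defensive.
Import Order.TTheory GRing.Theory Num.Theory.
Local Open Scope ring_scope.

Definition CC_fieldType : fieldType := (Rdefinitions.R)[i].

(* Generators of the free algebra: x_i | c_i | g_sigma (sigma in S_n).
   (Indices 'I_n stand for 1..n.) *)
Definition gen (n : nat) := ('I_n + 'I_n + {perm 'I_n})%type.
Definition gX n (i : 'I_n) : gen n := inl (inl i).
Definition gC n (i : 'I_n) : gen n := inl (inr i).
Definition gS n (s : {perm 'I_n}) : gen n := inr s.

(* Words = monomials of the free associative algebra C<gen n>. *)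
Definition word n := seq (gen n).

Definition fsum n := seq (CC_fieldType * word n).

(* coefficient of a word in a formal sum; two formal sums are equal
   in the free algebra iff all their coefficients agree *)
Definition coef n (p : fsum n) (w : word n) : CC_fieldType :=
  \sum_(t <- p) (if t.2 == w then t.1 else 0).

Definition fs_word n (w : word n) : fsum n := [:: (1, w)].
Definition fs_scale n (a : CC_fieldType) (p : fsum n) : fsum n :=
  [seq (a * t.1, t.2) | t <- p].
Definition fs_add n (p q : fsum n) : fsum n := p ++ q.
Definition fs_sub n (p q : fsum n) : fsum n := p ++ fs_scale (-1) q.
Definition fs_mul n (p q : fsum n) : fsum n :=
  [seq (s.1 * t.1, s.2 ++ t.2) | s <- p, t <- q].
Definition fs_one n : fsum n := fs_word [::].

Definition sref n (i : 'I_n) (j : 'I_n) : {perm 'I_n} := tperm i j.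

Inductive hc_rel (n : nat) (u : CC_fieldType) : fsum n -> Prop :=
  | R_xx (i j : 'I_n) :
      hc_rel u (fs_sub (fs_word [:: gX i; gX j]) (fs_word [:: gX j; gX i]))
  | R_cc (i : 'I_n) :
      hc_rel u (fs_sub (fs_word [:: gC i; gC i]) (fs_one n))
  | R_cac (i j : 'I_n) : i != j ->
      hc_rel u (fs_add (fs_word [:: gC i; gC j]) (fs_word [:: gC j; gC i]))
  (* group algebra C S_n: g_1 = 1, g_s g_t = g_{s o t} (s o t = t * s in mathcomp) *)
  | R_g1 : hc_rel u (fs_sub (fs_word [:: gS 1]) (fs_one n))
  | R_gg (s t : {perm 'I_n}) :
      hc_rel u (fs_sub (fs_word [:: gS s; gS t]) (fs_word [:: gS (t * s)%g]))
  | R_xc (i : 'I_n) :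
      hc_rel u (fs_add (fs_word [:: gX i; gC i]) (fs_word [:: gC i; gX i]))
  | R_xcc (i j : 'I_n) : i != j ->
      hc_rel u (fs_sub (fs_word [:: gX i; gC j]) (fs_word [:: gC j; gX i]))
  | R_gc (s : {perm 'I_n}) (i : 'I_n) :
      hc_rel u (fs_sub (fs_word [:: gS s; gC i]) (fs_word [:: gC (s i); gS s]))
  | R_xs (i j : 'I_n) : (val j = (val i).+1)%N ->
      hc_rel u (fs_sub
        (fs_sub (fs_word [:: gX j; gS (sref i j)]) (fs_word [:: gS (sref i j); gX i]))
        (fs_scale u (fs_sub (fs_one n) (fs_word [:: gC j; gC i]))))
  | R_xsk (i j k : 'I_n) : (val j = (val i).+1)%N -> k != i -> k != j ->
      hc_rel u (fs_sub (fs_word [:: gX k; gS (sref i j)]) (fs_word [:: gS (sref i j); gX k])).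

(* An element of a formal sum of: commutators [a,b] of monomials (these span
   the commutator subspace of the free algebra, by bilinearity), and elements
   a r b of the two-sided ideal generated by the relations. *)
Definition comm_part n (cs : seq (CC_fieldType * word n * word n)) : fsum n :=
  flatten [seq fs_scale t.1.1
             (fs_sub (fs_word (t.1.2 ++ t.2)) (fs_word (t.2 ++ t.1.2))) | t <- cs].
Definition ideal_part n (ids : seq (CC_fieldType * word n * fsum n * word n)) : fsum n :=
  flatten [seq fs_scale t.1.1.1
             (fs_mul (fs_mul (fs_word t.1.1.2) t.1.2) (fs_word t.2)) | t <- ids].

(* For p in the free algebra, its image in H = F / I lies in [H,H]
   iff p lies in [F,F] + I. *)
Definition in_HC_commutator (n : nat) (u : CC_fieldType) (p : fsum n) : Prop :=
  exists (cs : seq (CC_fieldType * word n * word n))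
         (ids : seq (CC_fieldType * word n * fsum n * word n)),
    (forall t, t \in ids -> hc_rel u t.1.2) /\
    forall w : word n, coef p w = coef (comm_part cs) w + coef (ideal_part ids) w.

Definition is_partition_of (n : nat) (l : seq nat) : Prop :=
  [/\ sorted geq l, all (fun k => 0 < k)%N l & sumn l = n].

Definition cycle_type n (w : {perm 'I_n}) : seq nat :=
  sort geq [seq #|C| | C : {set 'I_n} in porbits w].

(* Main.v *)
Require Import Defs.
From HB Require Import structures.
From mathcomp Require Import all_boot all_order all_algebra all_fingroup.
From mathcomp Require Import complex Rstruct.
From Stdlib Require Rdefinitions.
From mathcomp Require Import ring.
Set Implicit Arguments. Unset Strict Implicit. Unset Printing Implicit Defensive.
Import Order.TTheory GRing.Theory Num.Theory.
Local Open Scope ring_scope.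

Definition wrap n (a b : word n) (p : fsum n) : fsum n :=
  [seq (t.1, a ++ t.2 ++ b) | t <- p].

Lemma coef_cat n (p q : fsum n) v : coef (p ++ q) v = coef p v + coef q v.
Proof. by rewrite /coef big_cat. Qed.

Lemma coef_scale n a (p : fsum n) v : coef (fs_scale a p) v = a * coef p v.
Proof.
rewrite /coef big_map mulr_sumr; apply: eq_bigr => t _ /=.
by case: ifP; rewrite ?mulr0.
Qed.

Lemma coef_sub n (p q : fsum n) v : coef (fs_sub p q) v = coef p v - coef q v.
Proof. by rewrite /fs_sub coef_cat coef_scale mulN1r. Qed.

Lemma coef_nil n v : coef ([::] : fsum n) v = 0.
Proof. by rewrite /coef big_nil. Qed.

Lemma coef_flatten n (ps : seq (fsum n)) v :
  coef (flatten ps) v = \sum_(p <- ps) coef p v.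
Proof.
elim: ps => [|p ps IH]; first by rewrite big_nil coef_nil.
by rewrite /= coef_cat IH big_cons.
Qed.

Definition wX n (a b v : word n) : word n :=
  take (size v - size a - size b) (drop (size a) v).

Lemma coef_wrap n (a b : word n) p v :
  coef (wrap a b p) v = if a ++ wX a b v ++ b == v then coef p (wX a b v) else 0.
Proof.
have key : forall y, (a ++ y ++ b == v) = (y == wX a b v) && (a ++ wX a b v ++ b == v).
  move=> y; case E: (a ++ y ++ b == v).
    move/eqP: E => <-; rewrite /wX drop_size_cat // size_cat size_cat.
    have -> : (size a + (size y + size b) - size a - size b = size y)%N.
      by rewrite addKn addnK.
    by rewrite take_size_cat // !eqxx.
  by case: eqP => // Hy; rewrite -Hy E.
rewrite /coef big_map; case: ifP => Hc.
  by apply: eq_bigr => t _ /=; rewrite key Hc andbT.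
by rewrite big1 // => t _ /=; rewrite key Hc andbF.
Qed.

Lemma coef_wrap_ext n (a b : word n) p q :
  coef p =1 coef q -> coef (wrap a b p) =1 coef (wrap a b q).
Proof. by move=> H v; rewrite !coef_wrap H. Qed.

Lemma coef_mulw n (a b : word n) p v :
  coef (fs_mul (fs_mul (fs_word a) p) (fs_word b)) v = coef (wrap a b p) v.
Proof.
rewrite /fs_mul /fs_word /= cats0 /wrap.
elim: p => [|t p IH] //=.
by rewrite /coef !big_cons /= mul1r mulr1 -catA; congr (_ + _); exact: IH.
Qed.

Lemma coef_ideal n (ids : seq (CC_fieldType * word n * fsum n * word n)) v :
  coef (ideal_part ids) v =
  \sum_(t <- ids) t.1.1.1 * coef (wrap t.1.1.2 t.2 t.1.2) v.
Proof.
rewrite /ideal_part coef_flatten big_map; apply: eq_bigr => t _.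
by rewrite coef_scale coef_mulw.
Qed.
Definition Irel n u (p : fsum n) := exists ids : seq (CC_fieldType * word n * fsum n * word n),
  (forall t, t \in ids -> hc_rel u t.1.2) /\ coef p =1 coef (ideal_part ids).

Lemma I_ext n u (p q : fsum n) : coef p =1 coef q -> Irel u p -> Irel u q.
Proof. by move=> H [ids [H1 H2]]; exists ids; split=> // v; rewrite -H. Qed.

Lemma I_nil n u : Irel u ([::] : fsum n).
Proof. by exists [::]; split=> // v. Qed.

Lemma I_cat n u (p q : fsum n) : Irel u p -> Irel u q -> Irel u (p ++ q).
Proof.
move=> [i1 [H1 E1]] [i2 [H2 E2]]; exists (i1 ++ i2); split.
  by move=> t; rewrite mem_cat => /orP[/H1|/H2].
by move=> v; rewrite coef_cat E1 E2 !coef_ideal big_cat.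
Qed.

Lemma I_scale n u a (p : fsum n) : Irel u p -> Irel u (fs_scale a p).
Proof.
move=> [i1 [H1 E1]].
exists [seq (a * t.1.1.1, t.1.1.2, t.1.2, t.2) | t <- i1]; split.
  by move=> t /mapP [t' /H1 Ht' ->].
move=> v; rewrite coef_scale E1 !coef_ideal big_map mulr_sumr.
by apply: eq_bigr => t _ /=; rewrite mulrA.
Qed.

Lemma I_rel n u (r : fsum n) : hc_rel u r -> Irel u r.
Proof.
move=> H; exists [:: (1, [::], r, [::])]; split.
  by move=> t; rewrite inE => /eqP ->.
move=> v; rewrite coef_ideal big_cons big_nil addr0 mul1r /= coef_wrap /wX /=.
by rewrite cats0 subn0 subn0 drop0 take_size eqxx.
Qed.

Lemma wrap_wrap n (a b l r : word n) q :
  wrap a b (wrap l r q) = wrap (a ++ l) (r ++ b) q.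
Proof. by rewrite /wrap -map_comp; apply: eq_map => t /=; rewrite !catA. Qed.

Lemma I_wrap n u (a b : word n) p : Irel u p -> Irel u (wrap a b p).
Proof.
move=> [i1 [H1 E1]].
exists [seq (t.1.1.1, a ++ t.1.1.2, t.1.2, t.2 ++ b) | t <- i1]; split.
  by move=> t /mapP [t' /H1 Ht' ->].
move=> v; rewrite (coef_wrap_ext a b E1 v) coef_wrap !coef_ideal big_map.
under eq_bigr => t _ do rewrite /= -wrap_wrap coef_wrap.
case: ifP => _; last by rewrite big1 // => t _; rewrite mulr0.
by [].
Qed.

Definition heq n u (p q : fsum n) := Irel u (fs_sub p q).

Lemma heq_ext n u (p p' q q' : fsum n) :
  coef p =1 coef p' -> coef q =1 coef q' -> heq u p q -> heq u p' q'.
Proof. by move=> Hp Hq; apply: I_ext => v; rewrite !coef_sub Hp Hq. Qed.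

Lemma heq_refl n u (p : fsum n) : heq u p p.
Proof. by apply: I_ext (I_nil n u) => v; rewrite coef_sub coef_nil subrr. Qed.

Lemma heq_sym n u (p q : fsum n) : heq u p q -> heq u q p.
Proof.
move/(I_scale (-1)); apply: I_ext => v.
by rewrite coef_scale !coef_sub mulN1r opprB.
Qed.

Lemma heq_trans n u (p q r : fsum n) : heq u p q -> heq u q r -> heq u p r.
Proof.
move=> H1 H2; apply: I_ext (I_cat H1 H2) => v.
by rewrite coef_cat !coef_sub addrA subrK.
Qed.

Lemma heq_add n u (p p' q q' : fsum n) :
  heq u p p' -> heq u q q' -> heq u (p ++ q) (p' ++ q').
Proof.
move=> H1 H2; apply: I_ext (I_cat H1 H2) => v.
rewrite coef_cat !coef_sub !coef_cat. ring.
Qed.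

Lemma heq_scale n u a (p q : fsum n) : heq u p q -> heq u (fs_scale a p) (fs_scale a q).
Proof.
move/(I_scale a); apply: I_ext => v.
by rewrite coef_scale !coef_sub !coef_scale mulrBr.
Qed.

Lemma wrap_sub n (a b : word n) p q : wrap a b (fs_sub p q) = fs_sub (wrap a b p) (wrap a b q).
Proof. by rewrite /wrap /fs_sub /fs_scale map_cat -!map_comp. Qed.

Lemma wrap_scale n (a b : word n) c p : wrap a b (fs_scale c p) = fs_scale c (wrap a b p).
Proof. by rewrite /wrap /fs_scale -!map_comp. Qed.

Lemma wrap_word n (a b v : word n) : wrap a b (fs_word v) = fs_word (a ++ v ++ b).
Proof. by []. Qed.

Lemma heq_wrap n u (a b : word n) p q : heq u p q -> heq u (wrap a b p) (wrap a b q).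
Proof. by move/(I_wrap a b); rewrite /heq wrap_sub. Qed.

Lemma heq_wrapw n u (a b v v' : word n) : heq u (fs_word v) (fs_word v') ->
  heq u (fs_word (a ++ v ++ b)) (fs_word (a ++ v' ++ b)).
Proof. by move/(heq_wrap a b). Qed.

Lemma heq_wrapsw n u (a b v v' : word n) c : heq u (fs_word v) (fs_scale c (fs_word v')) ->
  heq u (fs_word (a ++ v ++ b)) (fs_scale c (fs_word (a ++ v' ++ b))).
Proof. by move/(heq_wrap a b); rewrite wrap_scale. Qed.
Definition cw n (s : seq 'I_n) : word n := [seq gC i | i <- s].

Lemma L1 n u (s : seq 'I_n) : heq u (fs_word (cw s ++ cw (rev s))) (fs_word [::]).
Proof.
elim: s => [|a s IH]; first exact: heq_refl.
have -> : cw (a :: s) ++ cw (rev (a :: s)) = [:: gC a] ++ (cw s ++ cw (rev s)) ++ [:: gC a].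
  by rewrite /cw rev_cons map_rcons -cats1 /= catA.
apply: heq_trans (heq_wrapw [:: gC a] [:: gC a] IH) _.
exact: (I_rel (R_cc u a)).
Qed.

Lemma L2 n u (w : {perm 'I_n}) (s : seq 'I_n) (t : word n) :
  heq u (fs_word (gS w :: cw s ++ t)) (fs_word (cw (map w s) ++ gS w :: t)).
Proof.
elim: s => [|a s IH]; first exact: heq_refl.
have H1 := heq_wrapw [::] (cw s ++ t) (I_rel (R_gc u w a)).
have H2 := heq_wrapw [:: gC (w a)] [::] IH.
rewrite /= !cats0 in H1 H2.
exact: heq_trans H1 H2.
Qed.

Lemma heq_scale1 n u (p : fsum n) : heq u p (fs_scale 1 p).
Proof. by apply: heq_ext (heq_refl u p) => // v; rewrite coef_scale mul1r. Qed.

Lemma L3 n u (a : 'I_n) (s : seq 'I_n) (t : word n) : a \notin s ->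
  heq u (fs_word (gC a :: cw s ++ t))
        (fs_scale ((-1) ^+ size s) (fs_word (cw s ++ gC a :: t))).
Proof.
elim: s => [|b s IH]; first by move=> _; rewrite expr0; exact: heq_scale1.
rewrite inE negb_or => /andP [ab /IH {}IH].
have H0 : heq u (fs_word [:: gC a; gC b]) (fs_scale (-1) (fs_word [:: gC b; gC a])).
  apply: I_ext (I_rel (R_cac u ab)) => v.
  by rewrite coef_sub coef_cat !coef_scale mulN1r opprK.
have H1 := heq_wrapsw [::] (cw s ++ t) H0.
have H2 := heq_scale (-1) (heq_wrap [:: gC b] [::] IH).
rewrite wrap_scale !wrap_word in H2.
rewrite /= cats0 in H1 H2.
rewrite /= in H2.
apply: heq_trans H1 _.
apply: heq_ext H2 => // v.
rewrite cats0 /coef !big_cons !big_nil /= exprS !mulr1.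
by case: ifP; rewrite ?mulr0.
Qed.
Lemma map_traject (T : Type) (f : T -> T) x m :
  map f (traject f x m) = traject f (f x) m.
Proof. by elim: m x => [|m IH] x //=; rewrite IH. Qed.

Lemma even_orbit n (lambda : seq nat) (w : {perm 'I_n}) :
  has (fun k => ~~ odd k) lambda -> cycle_type w = lambda ->
  exists x, ~~ odd #|porbit w x|.
Proof.
move=> /hasP [m Hm Hodd] Hct; rewrite -Hct /cycle_type mem_sort in Hm.
case/mapP: Hm => C; rewrite mem_enum => /imsetP [x _ ->] Em.
by exists x; rewrite -Em.
Qed.

Theorem proposition3p3p1 (n : nat) (u : CC_fieldType) (lambda : seq nat)
    (w : {perm 'I_n}) :
  is_partition_of n lambda ->
  has (fun k => ~~ odd k) lambda ->
  cycle_type w = lambda ->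
  in_HC_commutator u (fs_word [:: gS w]).
Proof.
move=> _ Hh Hct; have [x Hx] := even_orbit Hh Hct.
have Hk0 := card_porbit_neq0 w x.
have Hiter := iter_porbit w x.
have Huniq := uniq_traject_porbit w x.
move: Hk0 Hx Hiter Huniq; case: #|porbit w x| => [//|k'] _ Hodd Hiter Huniq.
set s' := traject w (w x) k'.
have Hs : traject w x k'.+1 = x :: s' by [].
rewrite Hs cons_uniq in Huniq; case/andP: Huniq => Hxs' _.
have Hmap : map w (x :: s') = rcons s' x.
  rewrite -Hs map_traject trajectSr -iterSr Hiter //.
set P := cw (x :: s').
set R := cw (rev (x :: s')).
set W := gS w.
have C1 : heq u (fs_word (P ++ W :: R)) (fs_scale (-1) (fs_word [:: W])).
  have a := L2 u w (rev (x :: s')) [::].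
  rewrite cats0 map_rev Hmap rev_rcons in a.
  have b := @L3 _ u x (rev s') [:: W].
  rewrite size_rev in b; have Hn : x \notin rev s' by rewrite mem_rev.
  have {}b := b Hn.
  have Hk : (-1) ^+ size s' = -1 :> CC_fieldType.
    by rewrite /s' size_traject -signr_odd /= in Hodd *; rewrite (negbNE Hodd) expr1.
  rewrite Hk in b.
  have ab := heq_trans a b.
  have c := heq_wrap P [::] ab.
  rewrite wrap_scale !wrap_word cats0 in c.
  have d := heq_scale (-1) (heq_wrapw [::] [:: W] (L1 u (x :: s'))).
  rewrite /= in d.
  apply: heq_trans c _.
  apply: heq_ext d => // v.
  by rewrite /R /P rev_cons /cw map_rcons -cats1 -!catA.
have C2 : heq u (fs_word ((W :: R) ++ P)) (fs_word [:: W]).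
  have d := heq_wrapw [:: W] [::] (L1 u (rev (x :: s'))).
  by rewrite revK /= !cats0 in d.
have Hq := I_cat (I_scale (2^-1) C1) (I_scale (- 2^-1) C2).
case: Hq => ids [Hids Eids].
exists [:: (- 2^-1, P, W :: R)], ids; split => // v.
rewrite -Eids /comm_part /= ?cats0 /coef !big_cons !big_nil /=.
do 3 case: (_ == v).
all: try ring.
all: have h2 : (2%:R : CC_fieldType) != 0 by change ((2%:R : (Rdefinitions.R)[i]) != 0); rewrite pnatr_eq0.
all: by field.
Qed.
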